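(* Let $n\ge 3$, let $w$ be the solution of \[ w''+\frac{n-1}{t}w'+e^{w}=0,\qquad w(0)=0,\quad w'(0)=0 \qquad (t>0), \] and let $w_0(t)=\ln(2n-4)-2\ln t$. Set $\lambda(t)=t^2e^{w(t)}$. (i) If $w$ and $w_0$ intersect infinitely many times on $(0,\infty)$, then the solution curve of the Gelfand problem makes infinitely many turns, i.e. $\lambda'(t)$ changes sign infinitely many times on $(0,\infty)$. (ii) Suppose $w$ and $w_0$ intersect only finitely many times, and $T$ is a point after the last intersection such that $(w-w_0)'(t)$ is of one sign for $t>T$. Then $\lambda(t)$ is monotone for $t>T$.
   Context: The Gelfand problem is $u''+\frac{n-1}{r}u'+\lambda e^u=0$ for $0<r<1$, $u'(0)=u(1)=0$. The solution $w$ is defined for all $t>0$. The function $w_0$ also solves the differential equation satisfied by $w$. The solution curve of the Gelfand problem is $t\mapsto(\lambda,u(0))=(t^2e^{w(t)},-w(t))$, $t\in(0,\infty)$; for each $t$, $u(r)=w(tr)-w(t)$ is the solution at $\lambda=\lambda(t)$. A turn is a change of sign of $\lambda'(t)$. *)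

(* Defs.v *)
From Stdlib Require Import Reals Lra List.
From Coquelicot Require Import Coquelicot.
Open Scope R_scope.

Definition w0 (n : nat) (t : R) : R := ln (2 * INR n - 4) - 2 * ln t.

Definition lam (w : R -> R) (t : R) : R := t ^ 2 * exp (w t).

(* w solves  w'' + (n-1)/t w' + e^w = 0 on (0,oo), w(0) = 0, w'(0) = 0
   (w'(0) taken as the right derivative at 0, since the problem lives on [0,oo)). *)
Definition gelfand_solution (n : nat) (w : R -> R) : Prop :=
  w 0 = 0 /\
  filterlim (fun h => (w h - w 0) / h) (at_right 0) (locally 0) /\
  (forall t, 0 < t -> ex_derive w t /\ ex_derive (Derive w) t) /\
  (forall t, 0 < t ->
     Derive (Derive w) t + (INR n - 1) / t * Derive w t + exp (w t) = 0).

Definition intersections (n : nat) (w : R -> R) (t : R) : Prop :=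
  0 < t /\ w t = w0 n t.

Definition finite_set (S : R -> Prop) : Prop :=
  exists l : list R, forall t, S t -> In t l.

(* Main.v *)
Require Import Defs.
From Stdlib Require Import Reals Lra Lia List Classical.
From Coquelicot Require Import Coquelicot.
Open Scope R_scope.

Lemma mono_up (f df : R -> R) (a : R) :
  (forall x, a < x -> is_derive f x (df x)) -> (forall x, a < x -> 0 <= df x) ->
  forall s t, a < s -> s <= t -> f s <= f t.
Proof.
  intros Hd Hp s t Hs Hst.
  destruct (MVT_gen f s t df) as [c [Hc Heq]].
  - intros x Hx. apply Hd. rewrite Rmin_left in Hx by lra. lra.
  - intros x Hx. rewrite Rmin_left in Hx by lra. apply continuity_pt_filterlim.
    apply (ex_derive_continuous (K:=R_AbsRing) (V:=R_NormedModule)). eexists. apply Hd. lra.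
  - rewrite Rmin_left in Hc by lra. rewrite Rmax_right in Hc by lra.
    assert (0 <= df c) by (apply Hp; lra).
    assert (0 <= df c * (t - s)) by (apply Rmult_le_pos; lra). lra.
Qed.

Lemma mono_down (f df : R -> R) (a : R) :
  (forall x, a < x -> is_derive f x (df x)) -> (forall x, a < x -> df x <= 0) ->
  forall s t, a < s -> s <= t -> f t <= f s.
Proof.
  intros Hd Hp s t Hs Hst.
  assert (H := mono_up (fun x => - f x) (fun x => - df x) a).
  assert (- f s <= - f t). { apply H; auto. intros x Hx. exact (@is_derive_opp R_AbsRing R_NormedModule f x (df x) (Hd x Hx)).
   intros x Hx; specialize (Hp x Hx); lra. }
  lra.
Qed.
Definition cc (n : nat) := 2 * INR n - 4.
Definition phi n (w : R -> R) t := w t - w0 n t.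
Definition pp (w : R -> R) t := Derive w t + 2 / t.
Definition EE n w t := pp w t ^ 2 / 2 + exp (w t) - cc n / t ^ 2 - cc n * phi n w t / t ^ 2.
Definition GG n w t := exp (w t) - cc n / t ^ 2 - cc n * phi n w t / t ^ 2.
Definition FF n w t := t ^ (2 * n - 2) * EE n w t.
Lemma phi_deriv n w t : gelfand_solution n w -> 0 < t ->
  is_derive (phi n w) t (pp w t).
Proof.
  intros [_ [_ [Hd _]]] Ht. destruct (Hd t Ht) as [H1 H2].
  unfold phi, w0, pp. auto_derive.
  - auto.
  - change (fun x => w x) with w. field. lra.
Qed.
Lemma F_deriv n w t : (3 <= n)%nat -> gelfand_solution n w -> 0 < t ->
  is_derive (FF n w) t (t ^ (2 * n - 3) * (2 * (INR n - 2)) * GG n w t).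
Proof.
  intros Hn [_ [_ [Hd Hode]]] Ht. destruct (Hd t Ht) as [H1 H2].
  specialize (Hode t Ht).
  assert (Hdd : Derive (Derive w) t = - ((INR n - 1) / t * Derive w t) - exp (w t)) by lra.
  unfold FF, EE, GG, phi, w0, pp, cc. auto_derive.
  - repeat split; auto; nra.
  - change (fun x => w x) with w. change (fun x => Derive w x) with (Derive w).
    rewrite Hdd.
    destruct n as [|[|[|m]]]; try lia.
    replace (S (S (S m)) + (S (S (S m)) + 0) - 2)%nat with (S (2*m+3)) by lia.
    replace (2 * S (S (S m)) - 3)%nat with (2*m+3)%nat by lia.
    replace (INR (S (2*m+3))) with (2*INR m + 4) by (rewrite S_INR, plus_INR, mult_INR; simpl; lra).
    replace (INR (S (S (S m)))) with (INR m + 3) by (rewrite !S_INR; lra).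
    simpl pred. simpl pow.
    set (X := t ^ (2*m+3)). field. lra.
Qed.

Lemma cc_pos n : (3 <= n)%nat -> 0 < cc n.
Proof. intros H. unfold cc. apply le_INR in H. simpl in H. lra. Qed.

Lemma exp_phi n w t : (3 <= n)%nat -> 0 < t ->
  exp (w t) = cc n / t ^ 2 * exp (phi n w t).
Proof.
  intros Hn Ht. pose proof (cc_pos n Hn) as Hc.
  unfold phi, w0. fold (cc n).
  replace (w t - (ln (cc n) - 2 * ln t)) with (w t + (ln t + ln t) + - ln (cc n)) by ring.
  rewrite !exp_plus, exp_Ropp, !exp_ln by auto. field. lra.
Qed.

Lemma lam_phi n w t : (3 <= n)%nat -> 0 < t -> lam w t = cc n * exp (phi n w t).
Proof.
  intros Hn Ht. unfold lam. rewrite (exp_phi n w t Hn Ht). field. lra.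
Qed.

Lemma GG_nonneg n w t : (3 <= n)%nat -> 0 < t -> 0 <= GG n w t.
Proof.
  intros Hn Ht. unfold GG. rewrite (exp_phi n w t Hn Ht).
  pose proof (exp_ineq1_le (phi n w t)). pose proof (cc_pos n Hn).
  assert (0 < cc n / t ^ 2) by (apply Rdiv_lt_0_compat; nra).
  replace (cc n / t ^ 2 * exp (phi n w t) - cc n / t ^ 2 - cc n * phi n w t / t ^ 2)
    with (cc n / t ^ 2 * (exp (phi n w t) - (1 + phi n w t))) by (field; lra).
  apply Rmult_le_pos; lra.
Qed.


Lemma lam_deriv w t : ex_derive w t -> 0 < t -> is_derive (lam w) t (lam w t * pp w t).
Proof.
  intros H Ht. unfold lam, pp. auto_derive. auto.
  change (fun x => w x) with w. field. lra.
Qed.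

Lemma w_small n w : gelfand_solution n w -> exists d, 0 < d /\ forall y, 0 < y < d -> Rabs (w y) < y.
Proof.
  intros [H0 [Hl _]]. rewrite H0 in Hl.
  apply filterlim_locally with (eps := mkposreal 1 Rlt_0_1) in Hl.
  destruct Hl as [d Hd]. exists d. split. apply cond_pos.
  intros y Hy. assert (Hb : ball 0 d y).
  { unfold ball; simpl; unfold AbsRing_ball, abs, minus, plus, opp; simpl.
    rewrite Ropp_0, Rplus_0_r, Rabs_pos_eq; lra. }
  specialize (Hd y Hb (proj1 Hy)). revert Hd.
  unfold ball; simpl; unfold AbsRing_ball, abs, minus, plus, opp; simpl.
  rewrite Ropp_0, Rplus_0_r, Rminus_0_r. intros Hd.
  unfold Rdiv in Hd. rewrite Rabs_mult, Rabs_inv, (Rabs_pos_eq y) in Hd by lra.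
  apply Rmult_lt_reg_r with (/ y). apply Rinv_0_lt_compat; lra.
  rewrite Rinv_r by lra. exact Hd.
Qed.

Lemma key n w a : (3 <= n)%nat -> gelfand_solution n w -> 0 < a ->
  phi n w a = 0 -> pp w a = 0 -> False.
Proof.
  intros Hn Hg Ha Hp0 Hpp0. pose proof (cc_pos n Hn) as Hc.
  assert (Hmono : forall s t, 0 < s -> s <= t -> FF n w s <= FF n w t).
  { apply mono_up with (df := fun t => t ^ (2 * n - 3) * (2 * (INR n - 2)) * GG n w t).
    - intros x Hx. apply F_deriv; auto.
    - intros x Hx. apply Rmult_le_pos. apply Rmult_le_pos.
      apply pow_le; lra. apply le_INR in Hn. simpl in Hn. lra.
      apply GG_nonneg; auto. }
  assert (HFa : FF n w a = 0).
  { unfold FF, EE. rewrite Hpp0, Hp0, (exp_phi n w a Hn Ha), Hp0, exp_0. field. lra. }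
  assert (Hpz : forall t, 0 < t <= a -> pp w t = 0).
  { intros t Ht. specialize (Hmono t a (proj1 Ht) (proj2 Ht)). rewrite HFa in Hmono.
    pose proof (GG_nonneg n w t Hn (proj1 Ht)) as HG.
    assert (Hpow : 0 < t ^ (2 * n - 2)) by (apply pow_lt; lra).
    assert (HE : EE n w t = pp w t ^ 2 / 2 + GG n w t) by (unfold EE, GG; ring).
    unfold FF in Hmono. rewrite HE in Hmono.
    assert (pp w t ^ 2 / 2 + GG n w t <= 0).
    { destruct (Rle_dec (pp w t ^ 2 / 2 + GG n w t) 0); auto.
      exfalso. assert (0 < t ^ (2 * n - 2) * (pp w t ^ 2 / 2 + GG n w t)) by (apply Rmult_lt_0_compat; lra). lra. }
    nra. }
  assert (Hphi : forall t, 0 < t <= a -> w t = w0 n t).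
  { intros t Ht. destruct (Req_dec t a) as [->|Hne].
    - unfold phi in Hp0. lra.
    - destruct (MVT_gen (phi n w) t a (pp w)) as [c [Hc1 Hc2]].
      + intros x Hx. rewrite Rmin_left in Hx by lra. apply phi_deriv; auto. lra.
      + intros x Hx. rewrite Rmin_left in Hx by lra. apply continuity_pt_filterlim.
        apply (ex_derive_continuous (K:=R_AbsRing) (V:=R_NormedModule)). eexists. apply phi_deriv; auto. lra.
      + rewrite Rmin_left in Hc1 by lra. rewrite Rmax_right in Hc1 by lra.
        rewrite Hpz in Hc2 by lra. unfold phi in *. lra. }
  destruct (w_small n w Hg) as [d [Hd Hsm]].
  set (e := exp ((ln (cc n) - 1) / 2)).
  assert (He : 0 < e) by apply exp_pos.
  set (t := Rmin (Rmin (d / 2) (Rmin a 1)) (e / 2)).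
  assert (Ht1 : 0 < t) by (unfold t; repeat apply Rmin_glb_lt; lra).
  assert (Ht2 : t <= d / 2 /\ t <= a /\ t <= 1 /\ t <= e / 2).
  { unfold t. pose proof (Rmin_l (Rmin (d / 2) (Rmin a 1)) (e / 2)).
    pose proof (Rmin_r (Rmin (d / 2) (Rmin a 1)) (e / 2)).
    pose proof (Rmin_l (d / 2) (Rmin a 1)). pose proof (Rmin_r (d / 2) (Rmin a 1)).
    pose proof (Rmin_l a 1). pose proof (Rmin_r a 1). lra. }
  assert (Hl : ln t < (ln (cc n) - 1) / 2).
  { rewrite <- (ln_exp ((ln (cc n) - 1) / 2)). apply ln_increasing; fold e; lra. }
  specialize (Hsm t ltac:(lra)). rewrite (Hphi t ltac:(lra)) in Hsm.
  unfold w0 in Hsm. fold (cc n) in Hsm.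
  apply Rabs_def2 in Hsm. lra.
Qed.

Lemma no_small_zero n w : (3 <= n)%nat -> gelfand_solution n w ->
  exists d0, 0 < d0 /\ forall t, 0 < t < d0 -> w t <> w0 n t.
Proof.
  intros Hn Hg. pose proof (cc_pos n Hn) as Hc.
  destruct (w_small n w Hg) as [d [Hd Hsm]].
  set (e := exp ((ln (cc n) - 1) / 2)).
  assert (He : 0 < e) by apply exp_pos.
  exists (Rmin (Rmin d 1) e). split.
  { repeat apply Rmin_glb_lt; lra. }
  intros t Ht Heq.
  pose proof (Rmin_l (Rmin d 1) e). pose proof (Rmin_r (Rmin d 1) e).
  pose proof (Rmin_l d 1). pose proof (Rmin_r d 1).
  assert (Hl : ln t < (ln (cc n) - 1) / 2).
  { rewrite <- (ln_exp ((ln (cc n) - 1) / 2)). apply ln_increasing; fold e; lra. }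
  specialize (Hsm t ltac:(lra)). rewrite Heq in Hsm.
  unfold w0 in Hsm. fold (cc n) in Hsm.
  apply Rabs_def2 in Hsm. lra.
Qed.

Lemma ball_R (x e y : R) : ball x e y <-> Rabs (y - x) < e.
Proof.
  unfold ball; simpl; unfold AbsRing_ball, abs, minus, plus, opp; simpl. tauto.
Qed.

Lemma isolated n w x : (3 <= n)%nat -> gelfand_solution n w -> 0 < x ->
  exists eps, 0 < eps /\ forall y, Rabs (y - x) < eps -> intersections n w y -> y = x.
Proof.
  intros Hn Hg Hx.
  destruct (Req_dec (phi n w x) 0) as [Hz|Hnz].
  - assert (Hp : pp w x <> 0) by (intro; eapply key; eauto).
    pose proof (phi_deriv n w x Hg Hx) as Hd. apply is_derive_Reals in Hd.
    destruct (Hd (Rabs (pp w x)) ltac:(apply Rabs_pos_lt; auto)) as [dl Hdl].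
    exists dl. split. apply cond_pos. intros y Hy [Hy0 Hyz].
    destruct (Req_dec y x) as [|Hne]; auto. exfalso.
    specialize (Hdl (y - x) ltac:(lra) Hy).
    replace (x + (y - x)) with y in Hdl by ring.
    assert (phi n w y = 0) by (unfold phi; lra).
    rewrite H, Hz in Hdl. unfold Rdiv in Hdl. rewrite Rminus_0_r, Rmult_0_l, Rminus_0_l, Rabs_Ropp in Hdl. lra.
  - pose proof (phi_deriv n w x Hg Hx) as Hd.
    assert (Hc : continuous (phi n w) x).
    { apply (ex_derive_continuous (K:=R_AbsRing) (V:=R_NormedModule)). eexists; eauto. }
    apply filterlim_locally with (eps := mkposreal _ (Rabs_pos_lt _ Hnz)) in Hc.
    destruct Hc as [d Hd2]. exists d. split. apply cond_pos.
    intros y Hy [Hy0 Hyz]. exfalso.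
    assert (Hb : ball x d y) by (apply ball_R; auto).
    specialize (Hd2 y Hb). apply ball_R in Hd2. simpl in Hd2.
    assert (phi n w y = 0) by (unfold phi; lra).
    rewrite H in Hd2. apply ball_R in Hd2. assert (Hq : Rabs (0 - phi n w x) < Rabs (phi n w x)) by exact Hd2. replace (0 - phi n w x) with (- phi n w x) in Hq by ring. rewrite Rabs_Ropp in Hq. lra.
Qed.

Definition Pfin n w x := exists l : list R, forall y, intersections n w y -> y <= x -> In y l.

Lemma fin_bounded n w : (3 <= n)%nat -> gelfand_solution n w -> forall x, Pfin n w x.
Proof.
  intros Hn Hg x0. apply NNPP. intros Hnot.
  destruct (no_small_zero n w Hn Hg) as [d0 [Hd0 Hns]].
  assert (HB0 : Pfin n w (d0 / 2)).
  { exists nil. intros y [Hy0 Hyz] Hy. exfalso. apply (Hns y); auto. lra. }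
  assert (Hmon : forall a b, a <= b -> Pfin n w b -> Pfin n w a).
  { intros a b Hab [l Hl]. exists l. intros y Hy Hya. apply Hl; auto. lra. }
  assert (Hbd : bound (Pfin n w)).
  { exists x0. intros x Hx. destruct (Rle_dec x x0); auto. exfalso. apply Hnot.
    apply Hmon with x; auto. lra. }
  destruct (completeness (Pfin n w) Hbd (ex_intro _ _ HB0)) as [s [Hub Hlub]].
  assert (Hs : d0 / 2 <= s) by (apply Hub; auto).
  destruct (isolated n w s Hn Hg ltac:(lra)) as [eps [Heps Hiso]].
  assert (Hex : exists x, Pfin n w x /\ s - eps < x).
  { apply NNPP. intros Hne.
    assert (s <= s - eps).
    { apply Hlub. intros x Hx. destruct (Rle_dec x (s - eps)); auto. exfalso. apply Hne.
      exists x. split; auto. lra. }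
    lra. }
  destruct Hex as [x [[l Hl] Hx]].
  assert (Pfin n w (s + eps / 2)).
  { exists (s :: l). intros y Hy Hys. destruct (Rle_dec y x).
    - right. apply Hl; auto.
    - left. symmetry. apply Hiso; auto. apply Rabs_def1.
      + lra.
      + assert (x <= s) by (apply Hub; exists l; auto). lra. }
  assert (s + eps / 2 <= s) by (apply Hub; auto). lra.
Qed.

Lemma tail_fin n w T : (3 <= n)%nat -> gelfand_solution n w -> 0 < T ->
  ((forall s, T < s -> 0 <= pp w s) \/ (forall s, T < s -> pp w s <= 0)) ->
  exists l : list R, forall y, intersections n w y -> T < y -> In y l.
Proof.
  intros Hn Hg HT Hsg.
  assert (Hm : (forall s t, T < s -> s <= t -> phi n w s <= phi n w t) \/
               (forall s t, T < s -> s <= t -> phi n w t <= phi n w s)).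
  { destruct Hsg as [H|H]; [left|right].
    - apply mono_up with (df := pp w); auto. intros; apply phi_deriv; auto; lra.
    - apply mono_down with (df := pp w); auto. intros; apply phi_deriv; auto; lra. }
  assert (Htwo : forall z1 z2, intersections n w z1 -> intersections n w z2 ->
            T < z1 -> z1 < z2 -> False).
  { intros z1 z2 [H1 E1] [H2 E2] Hz1 Hz12.
    assert (P1 : phi n w z1 = 0) by (unfold phi; lra).
    assert (P2 : phi n w z2 = 0) by (unfold phi; lra).
    assert (Hz : forall y, z1 <= y <= z2 -> phi n w y = 0).
    { intros y Hy. destruct Hm as [M|M].
      - pose proof (M z1 y Hz1 (proj1 Hy)). pose proof (M y z2 ltac:(lra) (proj2 Hy)). lra.
      - pose proof (M z1 y Hz1 (proj1 Hy)). pose proof (M y z2 ltac:(lra) (proj2 Hy)). lra. }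
    set (m := (z1 + z2) / 2).
    assert (Hloc : locally m (fun t => (fun _ : R => 0) t = phi n w t)).
    { assert (Hp : 0 < (z2 - z1) / 2) by lra.
      exists (mkposreal _ Hp). intros y Hy. apply ball_R in Hy. assert (Hy2 : Rabs (y - m) < (z2 - z1) / 2) by exact Hy. apply Rabs_def2 in Hy2. symmetry. apply Hz. unfold m in Hy2. lra. }

    assert (D1 : is_derive (phi n w) m 0).
    { eapply is_derive_ext_loc. exact Hloc. apply (is_derive_const (K:=R_AbsRing) (V:=R_NormedModule)). }
    assert (D2 : is_derive (phi n w) m (pp w m)) by (apply phi_deriv; auto; unfold m; lra).
    apply is_derive_unique in D1. apply is_derive_unique in D2.
    apply (key n w m Hn Hg); unfold m in *; try lra. apply Hz; lra. }
  destruct (classic (exists z, intersections n w z /\ T < z)) as [[z [Hz HTz]]|Hno].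
  - exists (z :: nil). intros y Hy HTy. left.
    destruct (Rtotal_order z y) as [H|[H|H]]; auto; exfalso.
    + apply (Htwo z y); auto.
    + apply (Htwo y z); auto.
  - exists nil. intros y Hy HTy. apply Hno. eauto.
Qed.

Theorem lemma3p1 (n : nat) (w : R -> R) :
  (3 <= n)%nat ->
  gelfand_solution n w ->
  (~ finite_set (intersections n w) ->
     forall T : R, exists s1 s2 : R,
       T < s1 /\ T < s2 /\
       Derive (lam w) s1 < 0 /\ 0 < Derive (lam w) s2) /\
  (forall T : R,
     finite_set (intersections n w) ->
     0 < T ->
     (forall t, intersections n w t -> t < T) ->
     ((forall t, T < t -> 0 < Derive (fun s => w s - w0 n s) t) \/
      (forall t, T < t -> Derive (fun s => w s - w0 n s) t < 0)) ->
     ((forall s t, T < s -> s <= t -> lam w s <= lam w t) \/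
      (forall s t, T < s -> s <= t -> lam w t <= lam w s))).
Proof.
  intros Hn Hg. pose proof (cc_pos n Hn) as Hc.
  assert (HDl : forall t, 0 < t -> Derive (lam w) t = lam w t * pp w t).
  { intros t Ht. apply is_derive_unique. apply lam_deriv; auto.
    destruct Hg as [_ [_ [Hd _]]]. apply Hd; auto. }
  assert (Hlp : forall t, 0 < t -> 0 < lam w t).
  { intros t Ht. rewrite (lam_phi n) by auto. apply Rmult_lt_0_compat; auto. apply exp_pos. }
  assert (HDp : forall t, 0 < t -> Derive (fun s => w s - w0 n s) t = pp w t).
  { intros t Ht. apply is_derive_unique. change (fun s => w s - w0 n s) with (phi n w).
    apply phi_deriv; auto. }
  split.
  - intros Hinf T. apply NNPP. intros Hno.
    set (T' := Rmax T 1).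
    assert (HT' : T <= T' /\ 1 <= T') by (split; [apply Rmax_l | apply Rmax_r]).
    assert (Hsg : (forall s, T' < s -> 0 <= pp w s) \/ (forall s, T' < s -> pp w s <= 0)).
    { destruct (classic (exists s1, T' < s1 /\ pp w s1 < 0)) as [[s1 [H1 H2]]|Hn1].
      - right. intros s Hs. destruct (Rle_dec (pp w s) 0) as [|Hgt]; auto. exfalso.
        apply Hno. exists s1, s. repeat split; try lra.
        + rewrite HDl by lra. assert (0 < lam w s1) by (apply Hlp; lra).
          assert (0 < lam w s1 * - pp w s1) by (apply Rmult_lt_0_compat; lra). lra.
        + rewrite HDl by lra. apply Rmult_lt_0_compat; [apply Hlp; lra | lra].
      - left. intros s Hs. destruct (Rle_dec 0 (pp w s)); auto. exfalso. apply Hn1.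
        exists s. split; auto. lra. }
    destruct (tail_fin n w T' Hn Hg ltac:(lra) Hsg) as [l2 Hl2].
    destruct (fin_bounded n w Hn Hg T') as [l1 Hl1].
    apply Hinf. exists (l1 ++ l2). intros y Hy. apply in_or_app.
    destruct (Rle_dec y T'); [left; apply Hl1 | right; apply Hl2]; auto. lra.
  - intros T _ HT _ Hsg.
    assert (Hm : (forall s t, T < s -> s <= t -> phi n w s <= phi n w t) \/
                 (forall s t, T < s -> s <= t -> phi n w t <= phi n w s)).
    { destruct Hsg as [H|H]; [left|right].
      - apply mono_up with (df := pp w). intros; apply phi_deriv; auto; lra.
        intros x Hx. rewrite <- HDp by lra. apply Rlt_le, H; auto.
      - apply mono_down with (df := pp w). intros; apply phi_deriv; auto; lra.
        intros x Hx. rewrite <- HDp by lra. apply Rlt_le, H; auto. }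
    assert (Hexp : forall a b, a <= b -> cc n * exp a <= cc n * exp b).
    { intros a b Hab. apply Rmult_le_compat_l; [lra|].
      destruct (Rle_lt_or_eq_dec a b Hab) as [H| ->]; [apply Rlt_le, exp_increasing; auto | lra]. }
    destruct Hm as [M|M]; [left|right]; intros s t Hs Hst;
      rewrite !(lam_phi n) by first [exact Hn | lra]; apply Hexp; apply M; auto.
Qed.
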